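(* Let $(\mathcal{A},m)$ be a multiarrangement and $H_0\in\mathcal{A}$. Then $(\mathcal{A},m+k\delta_{H_0})$ has a good summand to $H_0$ for all sufficiently large integers $k$.
   Context: Let $\mathbb{K}$ be a field, $S=\mathbb{K}[x_1,\dots,x_\ell]$. A multiarrangement $(\mathcal{A},m)$ is a finite set of linear hyperplanes $H=\ker\alpha_H$ of $\mathbb{K}^\ell$ with multiplicity $m:\mathcal{A}\to\mathbb{Z}_{>0}$. $D(\mathcal{A},m)=\{\theta\in\mathrm{Der}_{\mathbb{K}}(S):\theta(\alpha_H)\in\alpha_H^{m(H)}S\ \forall H\}$. $\delta_{H_0}$ is the function on $\mathcal{A}$ equal to $1$ at $H_0$ and $0$ elsewhere. A good summand to $H_0$ for $(\mathcal{A},m)$ is a homogeneous $\theta_0\in D(\mathcal{A},m)$ with all $\theta_0(x_i)$ zero or homogeneous of degree $m(H_0)$, and $\theta_0(\alpha_{H_0})=\alpha_{H_0}^{m(H_0)}$. *)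

(* Defs.v *)
From HB Require Import structures.
From mathcomp Require Import all_boot all_order all_algebra.
From mathcomp Require Import mpoly.
Set Implicit Arguments. Unset Strict Implicit. Unset Printing Implicit Defensive.
Import GRing.Theory.
Local Open Scope ring_scope.

(* S = K[x_1..x_l] is {mpoly K[l]}.  A K-derivation of S is determined by
   (and freely given by) its values on the variables: theta = sum_i theta(x_i) d/dx_i.
   We represent theta by the family of its values theta(x_i). *)
Definition der (K : fieldType) (l : nat) := 'I_l -> {mpoly K[l]}.

Definition der_app (K : fieldType) (l : nat) (theta : der K l) (f : {mpoly K[l]})
  : {mpoly K[l]} := \sum_(i < l) theta i * f^`M(i).

Definition linform (K : fieldType) (l : nat) (a : 'rV[K]_l) : {mpoly K[l]} :=
  \sum_(i < l) a 0 i *: 'X_i.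

Definition is_arrangement (K : fieldType) (l n : nat) (alpha : 'I_n -> 'rV[K]_l) : Prop :=
  (forall j, alpha j != 0) /\
  (forall i j, i != j -> forall c : K, alpha i != c *: alpha j).

Definition in_D (K : fieldType) (l n : nat) (alpha : 'I_n -> 'rV[K]_l) (m : 'I_n -> nat)
  (theta : der K l) : Prop :=
  forall j, exists q : {mpoly K[l]},
    der_app theta (linform (alpha j)) = linform (alpha j) ^+ m j * q.

Definition good_summand (K : fieldType) (l n : nat) (alpha : 'I_n -> 'rV[K]_l)
  (m : 'I_n -> nat) (H0 : 'I_n) (theta0 : der K l) : Prop :=
  in_D alpha m theta0 /\
  (forall i, theta0 i \is (m H0).-homog) /\
  der_app theta0 (linform (alpha H0)) = linform (alpha H0) ^+ m H0.

Definition add_delta (n : nat) (m : 'I_n -> nat) (H0 : 'I_n) (k : nat) : 'I_n -> nat :=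
  fun j => (m j + (if j == H0 then k else 0))%N.

(* Main.v *)
Require Import Defs.
From HB Require Import structures.
From mathcomp Require Import all_boot all_order all_algebra.
From mathcomp Require Import mpoly.
From mathcomp Require Import ring.
Set Implicit Arguments. Unset Strict Implicit. Unset Printing Implicit Defensive.
Import GRing.Theory.
Local Open Scope ring_scope.

Section S.
Variables (K : fieldType) (l : nat).
Local Notation P := {mpoly K[l]}.
Local Notation F := ('I_l -> P).

Definition ev (th : F) (a : 'rV[K]_l) : P := \sum_(i < l) a 0 i *: th i.

Lemma dXU (i j : 'I_l) : ('X_j : P)^`M(i) = (j == i)%:R.
Proof.
rewrite mderivX mnm1E; case: eqP => [->|_].
  have -> : (U_(i) - U_(i))%MM = 0%MM by apply/mnmP=> k; rewrite !mnmE subnn.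
  by rewrite mpolyX0 scale1r.
by rewrite scale0r.
Qed.

Lemma der_lin th a : der_app th (linform a) = ev th a.
Proof.
rewrite /der_app /ev; apply: eq_bigr => i _.
rewrite /linform raddf_sum /=.
rewrite (bigD1 i) //= big1 => [|j /negbTE ji]; last first.
  by rewrite mderivZ dXU ji scaler0.
by rewrite mderivZ dXU eqxx addr0 -scalerCA mulr1.
Qed.

Definition inI (G : seq 'rV[K]_l) (r : P) :=
  exists h : nat -> P, r = \sum_(i < size G) h i * linform G`_i.

Lemma inI0 G : inI G 0.
Proof. by exists (fun _ => 0); rewrite big1 // => i _; rewrite mul0r. Qed.

Lemma inID G r1 r2 : inI G r1 -> inI G r2 -> inI G (r1 + r2).
Proof.
move=> [h1 ->] [h2 ->]; exists (fun i => h1 i + h2 i).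
by rewrite -big_split; apply: eq_bigr => i _; rewrite mulrDl.
Qed.

Lemma inIM G p r : inI G r -> inI G (p * r).
Proof.
move=> [h ->]; exists (fun i => p * h i).
by rewrite mulr_sumr; apply: eq_bigr => i _; rewrite mulrA.
Qed.

Lemma inI_cons b G r : inI (b :: G) r ->
  exists s r', inI G r' /\ r = linform b * s + r'.
Proof.
move=> [h ->]; exists (h 0%N), (\sum_(i < size G) h i.+1 * linform G`_i).
split; first by exists (fun i => h i.+1).
rewrite [LHS](@big_ord_recl _ _ _ (size G)) /=; congr (_ + _); exact: mulrC.
Qed.

Definition scF (p : P) (th : F) : F := fun i => p * th i.
Definition addF (t1 t2 : F) : F := fun i => t1 i + t2 i.

Lemma ev_sc p th a : ev (scF p th) a = p * ev th a.
Proof.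
by rewrite /ev mulr_sumr; apply: eq_bigr => i _; rewrite /scF scalerAr.
Qed.

Lemma ev_add t1 t2 a : ev (addF t1 t2) a = ev t1 a + ev t2 a.
Proof. by rewrite /ev -big_split; apply: eq_bigr => i _; rewrite scalerDr. Qed.

Lemma ev_const (w : 'I_l -> K) (p : P) a :
  ev (fun i => w i *: p) a = (\sum_(i < l) a 0 i * w i) *: p.
Proof. by rewrite /ev scaler_suml; apply: eq_bigr => i _; rewrite scalerA. Qed.

Lemma linform_sum (I : finType) (c : I -> K) (v : I -> 'rV[K]_l) :
  linform (\sum_i c i *: v i) = \sum_i c i *: linform (v i).
Proof.
rewrite /linform; transitivity (\sum_(j < l) \sum_i (c i * v i 0 j) *: ('X_j : P)).
  apply: eq_bigr => j _; rewrite summxE scaler_suml; apply: eq_bigr => i _.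
  by congr (_ *: _); rewrite mxE.
rewrite exchange_big /=; apply: eq_bigr => i _.
by rewrite scaler_sumr; apply: eq_bigr => j _; rewrite scalerA.
Qed.

Section Main.
Variable a0 : 'rV[K]_l.
Local Notation A := (linform a0).

Definition goodF (G : seq 'rV[K]_l) (Fs : seq ('rV[K]_l * nat)) :=
  exists (N : nat) (th : F) (r : P), inI G r /\ ev th a0 + r = A ^+ N /\
    (forall g, g \in G -> ev th g = 0) /\
    (forall p, p \in Fs -> exists q, ev th p.1 = linform p.1 ^+ p.2 * q).

Lemma base G : goodF G [::].
Proof.
pose M : 'M[K]_(size G, l) := \matrix_(i, j) (G`_i) 0 j.
have [/submxP [u Hu] | nsub] := boolP (a0 <= M)%MS.
  exists 1%N, (fun _ => 0), A; split; last split => //.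
  - exists (fun i => \sum_(k < size G | val k == i) (u 0 k)%:MP).
    have -> : a0 = \sum_(i < size G) u 0 i *: G`_i.
      rewrite Hu; apply/rowP => j; rewrite !mxE summxE.
      by apply: eq_bigr => i _; rewrite !mxE.
    rewrite linform_sum; apply: eq_bigr => i _.
    rewrite (big_pred1 i) ?mul_mpolyC // => k; exact: val_eqE.
  - by rewrite /ev big1 ?add0r ?expr1 // => i _; rewrite scaler0.
  - by split => // g _; rewrite /ev big1 // => i _; rewrite scaler0.
have nz : (a0 *m cokermx M) != 0 by rewrite -submxE.
have [j vj] : exists j, (a0 *m cokermx M) 0 j != 0.
  case: (pickP (fun j => (a0 *m cokermx M) 0 j != 0)) => [j vj|H]; first by exists j.
  exfalso; move/negP: nz; apply; apply/eqP/rowP => k; rewrite [in RHS]mxE; apply/eqP.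
  by move/negbT: (H k); rewrite negbK.
pose w i := cokermx M i j / (a0 *m cokermx M) 0 j.
exists 1%N, (fun i => w i *: A), 0; split; first exact: inI0.
have S1 (g : 'rV[K]_l) : \sum_(i < l) g 0 i * w i = (g *m cokermx M) 0 j / (a0 *m cokermx M) 0 j.
  by rewrite [(g *m _) 0 j]mxE mulr_suml; apply: eq_bigr => i _; rewrite /w mulrA.
split; first by rewrite addr0 expr1 ev_const S1 divff // scale1r.
split => // g gG.
rewrite ev_const S1.
have [k kG <-] : exists2 k, (k < size G)%N & G`_k = g.
  by exists (index g G); rewrite ?index_mem ?nth_index.
have -> : (G`_k *m cokermx M) 0 j = (M *m cokermx M) (Ordinal kG) j.
  by rewrite !mxE; apply: eq_bigr => i _; rewrite !mxE.
by rewrite mulmx_coker mxE mul0r scale0r.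
Qed.

Lemma step G Fs b m : goodF G Fs -> goodF (b :: G) Fs -> goodF G ((b, m) :: Fs).
Proof.
move=> [N1 [t1 [r1 [I1 [E1 [Z1 D1]]]]]] [N2 [t2 [r2 [I2 [E2 [Z2 D2]]]]]].
have [s [r2' [I2' Er2]]] := inI_cons I2.
set B := linform b.
set X := A ^+ N2.
pose Sg := \sum_(i < m) X ^+ (m.-1 - i) * r2 ^+ i.
pose Sg' := \sum_(i < m) r2 ^+ (m.-1 - i) * (B * s) ^+ i.
pose th := addF (scF (A ^+ N1 * Sg) t2) (scF (s ^+ m * B ^+ m) t1).
exists (N1 + N2 * m)%N, th, (A ^+ N1 * (r2' * Sg') + (B * s) ^+ m * r1).
split; first by apply: inID; [apply: inIM; rewrite mulrC; apply: inIM | apply: inIM].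
split.
  rewrite /th ev_add !ev_sc.
  have -> : ev t2 a0 = X - r2 by rewrite /X -E2 addrK.
  have -> : ev t1 a0 = A ^+ N1 - r1 by rewrite -E1 addrK.
  have H1 : (X - r2) * Sg = X ^+ m - r2 ^+ m by rewrite subrXX.
  have H2 : r2' * Sg' = r2 ^+ m - (B * s) ^+ m.
    have -> : r2' = r2 - B * s by rewrite Er2 [B * s + _]addrC addrK.
    by rewrite subrXX.
  rewrite -mulrA [Sg * _]mulrC H1 H2 exprD exprM -/X exprMn.
  ring.
split.
  move=> g gG; rewrite /th ev_add !ev_sc Z1 // Z2 ?mem_head ?inE ?gG ?orbT //.
  by rewrite !mulr0 addr0.
move=> p; rewrite inE => /orP [/eqP -> | pF] /=.
  exists (s ^+ m * ev t1 b); rewrite /th ev_add !ev_sc Z2 ?mem_head //.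
  by rewrite mulr0 add0r; ring.
have [q1 Eq1] := D1 p pF; have [q2 Eq2] := D2 p pF.
exists (A ^+ N1 * Sg * q2 + s ^+ m * B ^+ m * q1).
by rewrite /th ev_add !ev_sc Eq1 Eq2; ring.
Qed.

Lemma mainL Fs : forall G, goodF G Fs.
Proof.
elim: Fs => [|[b m] Fs IH] G; first exact: base.
by apply: step; apply: IH.
Qed.
End Main.

Lemma linform_homog (a : 'rV[K]_l) : linform a \is 1.-homog.
Proof.
apply: rpred_sum => i _; apply: rpredZ.
by apply/dhomogP => mm; rewrite msuppX inE => /eqP ->; exact: mdeg1.
Qed.

Lemma pihomogM (h q : P) e d : h \is e.-homog ->
  pihomog mdeg (e + d) (h * q) = h * pihomog mdeg d q.
Proof.
move=> hh.
rewrite {1 2}[q]mpolyE mulr_sumr !linear_sum mulr_sumr; apply: eq_bigr => m _.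
rewrite -scalerAr !linearZ /= -scalerAr; congr (_ *: _).
rewrite pihomogX; case: eqP => [<-|ne].
  by rewrite pihomog_dE // dhomogM // dhomogX.
rewrite mulr0 (@pihomog_ne0 _ _ _ (e + mdeg m)) //; last by rewrite dhomogM // dhomogX.
by rewrite eqn_add2l; apply/eqP.
Qed.

Lemma ev_pi th a d :
  ev (fun i => pihomog mdeg d (th i)) a = pihomog mdeg d (ev th a).
Proof. by rewrite /ev linear_sum; apply: eq_bigr => i _; rewrite linearZ. Qed.

End S.

Theorem proposition3p5 (K : fieldType) (l n : nat) (alpha : 'I_n -> 'rV[K]_l)
  (m : 'I_n -> nat) (H0 : 'I_n) :
  is_arrangement alpha -> (forall j, (0 < m j)%N) ->
  exists k0 : nat, forall k : nat, (k0 <= k)%N ->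
    exists theta0 : der K l, good_summand alpha (add_delta m H0 k) H0 theta0.
Proof.
move=> _ _.
pose Fs := [seq (alpha j, m j) | j <- enum 'I_n & j != H0].
have [N [th [r [[h Er] [E [_ Dv]]]]]] := mainL (alpha H0) Fs [::].
rewrite big_ord0 in Er; subst r; rewrite addr0 in E.
set A := linform (alpha H0) in E.
exists (N + \sum_j m j)%N => k Hk.
have eD : add_delta m H0 k H0 = (m H0 + k)%N by rewrite /add_delta eqxx.
set D := (m H0 + k)%N in eD.
have ND : (N <= D)%N.
  by apply: leq_trans (leq_addl _ _); apply: leq_trans Hk; apply: leq_addr.
exists (fun i => pihomog mdeg D (scF (A ^+ (D - N)) th i)).
have key : ev (fun i => pihomog mdeg D (scF (A ^+ (D - N)) th i)) (alpha H0) = A ^+ D.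
  rewrite ev_pi ev_sc E -exprD subnK //.
  by rewrite pihomog_dE //; have := dhomogMn D (linform_homog (alpha H0)); rewrite mul1n.
split; [|split].
- move=> j; rewrite der_lin.
  case: (eqVneq j H0) => [->|ne].
    by exists 1; rewrite key eD mulr1.
  have jF : (alpha j, m j) \in Fs.
    by apply: map_f; rewrite mem_filter ne mem_enum.
  have [q Eq] := Dv _ jF; rewrite /= in Eq.
  have mD : (m j <= D)%N.
    apply: leq_trans (leq_addl _ _); apply: leq_trans Hk; apply: leq_trans (leq_addl _ _).
    by rewrite (bigD1 j) //= leq_addr.
  rewrite /add_delta (negbTE ne) addn0.
  exists (pihomog mdeg (D - m j) (A ^+ (D - N) * q)).
  rewrite ev_pi ev_sc Eq mulrCA -{1}(subnKC mD) pihomogM //.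
  by have := dhomogMn (m j) (linform_homog (alpha j)); rewrite mul1n.
- by move=> i; rewrite eD; apply: pihomogP.
- by rewrite der_lin key eD.
Qed.
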